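(* Let $n\ge1$ and $k\ge1$ be integers. (i) If $k=1$, then $f_n(\{n-k\})=2^{n-1}$ and $f_n(\{k\})=2^{n-1}$. (ii) If $k>1$ and $n\le k+1$, then $f_n(\{n-k\})=2^{n-1}$ and $f_n(\{k\})=2^{n-1}$. (iii) If $k>1$ and $n>k+1$, then $f_n(\{n-k\})=5\cdot2^{n-3}-2^{n-k-2}$ and $f_n(\{k\})=5\cdot2^{n-3}-2^{k-2}$.
   Context: For $m\ge1$ and a set $B$ of integers, $f_m(B)$ denotes the number of linear orders $q$ on $[m]$ such that for every triple $i<j<k$ in $[m]$: if $j\in B$ then $i$ is not ranked last among $\{i,j,k\}$ in $q$, and if $j\notin B$ then $k$ is not ranked first among $\{i,j,k\}$ in $q$ (only elements of $B\cap\{2,\dots,m-1\}$ matter). *)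

(* Defs.v *)
From mathcomp Require Import all_boot all_order all_algebra all_fingroup.
Set Implicit Arguments. Unset Strict Implicit. Unset Printing Implicit Defensive.

(* The element x : 'I_m represents the integer x+1 of [m] = {1,...,m}.
   A linear order on [m] is represented by a permutation q : 'S_m, where
   q x is the position (rank) of x; x is ranked before y iff q x < q y.
   "ranked last among {i,j,k}" = largest position; "ranked first" = smallest. *)

Definition elt (m : nat) (x : 'I_m) : int := Posz x.+1.

Definition good_triple (m : nat) (B : pred int) (q : 'S_m) (i j k : 'I_m) : bool :=
  if B (elt j) then ~~ ((q j < q i) && (q k < q i))
  else ~~ ((q k < q i) && (q k < q j)).

Definition f (m : nat) (B : pred int) : nat :=
  #|[set q : 'S_m | [forall i : 'I_m, forall j : 'I_m, forall k : 'I_m,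
        ((i < j) && (j < k)) ==> good_triple B q i j k]]|.

(* Main.v *)
Require Import Defs.
From mathcomp Require Import all_boot all_order all_algebra all_fingroup zify.
Set Implicit Arguments. Unset Strict Implicit. Unset Printing Implicit Defensive.

Definition g3 (jb : nat) (m : nat) (q : 'S_m) (i j k : 'I_m) : bool :=
  if nat_of_ord j == jb then ~~ ((q j < q i) && (q k < q i))
  else ~~ ((q k < q i) && (q k < q j)).

Definition V (jb m : nat) (q : 'S_m) : bool :=
  [forall i : 'I_m, forall j : 'I_m, forall k : 'I_m,
     ((i < j) && (j < k)) ==> g3 jb q i j k].

Definition ext (jb m : nat) (s : 'S_m) (p : 'I_m.+1) : bool :=
  [forall i : 'I_m, forall j : 'I_m, (i < j) ==>
     (if nat_of_ord j == jb then ~~ ((s j < s i) && (p <= s i))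
      else ~~ ((p <= s i) && (p <= s j)))].

Lemma VP jb m (q : 'S_m) :
  reflect (forall i j k : 'I_m, i < j -> j < k -> g3 jb q i j k) (V jb q).
Proof.
apply: (iffP forallP) => H.
  move=> i j k hij hjk.
  by move: (H i) => /forallP/(_ j)/forallP/(_ k)/implyP; apply; rewrite hij hjk.
move=> i; apply/forallP=> j; apply/forallP=> k; apply/implyP=> /andP[]; exact: H.
Qed.

Lemma extP (jb m : nat) (s : 'S_m) (p : 'I_m.+1) :
  reflect (forall i j : 'I_m, i < j ->
     (if nat_of_ord j == jb then ~~ ((s j < s i) && (p <= s i))
      else ~~ ((p <= s i) && (p <= s j)))) (ext jb s p).
Proof.
apply: (iffP forallP) => H.
  by move=> i j hij; move: (H i) => /forallP/(_ j)/implyP; apply.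
move=> i; apply/forallP=> j; apply/implyP; exact: H.
Qed.

Lemma liftv n (p : 'I_n.+1) (y : 'I_n) : nat_of_ord (lift p y) = y + (p <= y).
Proof. by rewrite /= /bump addnC. Qed.

Lemma lift_lt n (p : 'I_n.+1) (a b : 'I_n) : (lift p a < lift p b) = (a < b).
Proof. rewrite !liftv; case: (leqP p a); case: (leqP p b) => /= *; lia. Qed.

Lemma lift_gtp n (p : 'I_n.+1) (a : 'I_n) : (p < lift p a) = (p <= a).
Proof. rewrite !liftv; case: (leqP p a) => /= *; lia. Qed.

Lemma lift_ltp n (p : 'I_n.+1) (a : 'I_n) : (lift p a < p) = (a < p).
Proof. rewrite !liftv; case: (leqP p a) => /= *; lia. Qed.

Lemma liftmax_lt m (a b : 'I_m) : (lift ord_max a < lift ord_max b) = (a < b).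
Proof. by rewrite !liftv /= !(leqNgt m) !ltn_ord /= !addn0. Qed.


Lemma lmv m (a : 'I_m) : nat_of_ord (lift (@ord_max m) a) = a.
Proof. by rewrite liftv leqNgt ltn_ord addn0. Qed.

Lemma valid_lift jb m (s : 'S_m) (p : 'I_m.+1) :
  V jb (lift_perm ord_max p s) = V jb s && ext jb s p.
Proof.
apply/idP/idP.
  move/VP=> H; apply/andP; split.
    apply/VP=> i j k hij hjk.
    have := H (lift ord_max i) (lift ord_max j) (lift ord_max k).
    rewrite !liftmax_lt => /(_ hij hjk).
    by rewrite /g3 !lift_perm_lift !lift_lt ?lmv.
  apply/extP=> i j hij.
  have := H (lift ord_max i) (lift ord_max j) ord_max.
  rewrite liftmax_lt => /(_ hij).
  have hj : lift ord_max j < @ord_max m by rewrite lmv /= ltn_ord.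
  move=> /(_ hj).
  by rewrite /g3 !lift_perm_lift lift_perm_id !lift_lt !lift_gtp ?lmv.
case/andP=> /VP Hs /extP He; apply/VP=> i j k hij hjk.
have hjm : j < m by have := ltn_ord k; lia.
have him : i < m by lia.
case: (unliftP ord_max i) => [i'|] hi; last by move: him; rewrite hi /=; lia.
case: (unliftP ord_max j) => [j'|] hj; last by move: hjm; rewrite hj /=; lia.
subst i j.
rewrite liftmax_lt in hij.
case: (unliftP ord_max k) => [k'|] hk; subst k.
  rewrite liftmax_lt in hjk.
  have := Hs i' j' k' hij hjk.
  by rewrite /g3 !lift_perm_lift !lift_lt ?lmv.
have := He i' j' hij.
by rewrite /g3 !lift_perm_lift lift_perm_id !lift_lt !lift_gtp ?lmv.
Qed.

Definition posel m (s : 'S_m) (r : nat) : nat :=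
  if [pick x | nat_of_ord (s x) == r] is Some x then nat_of_ord x else 0.

Lemma poselE m (s : 'S_m) (x : 'I_m) r : nat_of_ord (s x) = r -> posel s r = x.
Proof.
move=> hx; rewrite /posel; case: pickP => [y /eqP hy | /(_ x)]; last by rewrite hx eqxx.
by congr val; apply: (@perm_inj _ s); apply: ord_inj; rewrite hy hx.
Qed.

Lemma posel_ex m (s : 'S_m) r : r < m -> exists x : 'I_m, nat_of_ord (s x) = r /\ posel s r = x.
Proof.
move=> hr; exists ((s^-1)%g (Ordinal hr)); rewrite permKV; split => //.
by apply: poselE; rewrite permKV.
Qed.

Definition Lm m (s : 'S_m) := posel s m.-1.
Definition SLm m (s : 'S_m) := posel s m.-2.

Lemma Lm_lt m (s : 'S_m) : 0 < m -> Lm s < m.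
Proof. move=> hm; rewrite /Lm; have [x [_ ->]] := posel_ex s (r:=m.-1) ltac:(lia). exact: ltn_ord. Qed.

Lemma ext_char jb m (s : 'S_m) (p : 'I_m.+1) : 0 < m ->
  ext jb s p = [|| nat_of_ord p == m,
                  (nat_of_ord p == m.-1) && ~~ ((Lm s < jb) && (jb < m)) |
                  [&& nat_of_ord p == m.-2, Lm s == jb & SLm s < jb]].
Proof.
move=> hm.
have [xL [hxL hL]] := posel_ex s (r:=m.-1) ltac:(lia).
have [xS [hxS hS]] := posel_ex s (r:=m.-2) ltac:(lia).
rewrite /Lm /SLm hL hS.
have hsm : forall x : 'I_m, nat_of_ord (s x) < m by move=> x; exact: ltn_ord.
have inS : forall x : 'I_m, m.-2 <= s x -> nat_of_ord x = xL \/ nat_of_ord x = xS.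
  move=> x hx; have := hsm x => hx2.
  have [e|e] : nat_of_ord (s x) = m.-1 \/ nat_of_ord (s x) = m.-2 by lia.
    by left; rewrite -(poselE e) hL.
  by right; rewrite -(poselE e) hS.
have hp := ltn_ord p.
apply/idP/idP.
  move/extP=> He.
  have pair : forall x y : 'I_m, nat_of_ord x != nat_of_ord y -> p <= s x -> p <= s y -> maxn x y = jb.
    move=> x y hxy hx hy.
    case: (ltngtP x y) => h; last by rewrite h eqxx in hxy.
      have := He x y h; case: eqP => [<- _|_]; first by lia.
      by rewrite hx hy.
    have := He y x h; case: eqP => [<- _|_]; first by lia.
    by rewrite hx hy.
  case: (eqVneq (nat_of_ord p) m) => [->//|hpm] /=.
  case: (eqVneq (nat_of_ord p) m.-1) => [hp1|hp1] /=.
    apply/orP; left; apply/negP=> /andP[hLj hjm].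
    have := He xL (Ordinal hjm) hLj; rewrite /= eqxx hxL hp1 leqnn andbT.
    have : nat_of_ord (s (Ordinal hjm)) != m.-1.
      apply/negP=> /eqP e; have := poselE e; rewrite hL /= => e2; lia.
    have := hsm (Ordinal hjm); lia.
  case: (eqVneq (nat_of_ord p) m.-2) => [hp2|hp2] /=.
    have hLS : nat_of_ord xL != nat_of_ord xS.
      apply/negP=> /eqP e; have : s xL = s xS by congr (s _); apply: ord_inj.
      move/(congr1 (@nat_of_ord m)); rewrite hxL hxS; lia.
    have := pair xL xS hLS; rewrite hxL hxS hp2 => /(_ ltac:(lia) (leqnn _)) hmax.
    case: (ltngtP xL xS) => h.
      have := He xL xS h; rewrite hxL hxS hp2.
      have -> : nat_of_ord xS == jb by apply/eqP; lia.
      lia.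
      apply/andP; split; [apply/eqP|]; lia.
    by rewrite h eqxx in hLS.
  (* p < m.-2 : three elements *)
  have h3 : 3 <= m by lia.
  have [xT [hxT _]] := posel_ex s (r:=(m - 3)) ltac:(lia).
  have dif : forall x y : 'I_m, nat_of_ord (s x) != nat_of_ord (s y) -> nat_of_ord x != nat_of_ord y.
    by move=> x y h; apply: contra h => /eqP e; rewrite (ord_inj e).
  have d1 := dif xL xS ltac:(rewrite hxL hxS; apply/eqP; lia).
  have d2 := dif xL xT ltac:(rewrite hxL hxT; apply/eqP; lia).
  have d3 := dif xS xT ltac:(rewrite hxS hxT; apply/eqP; lia).
  have m1 := pair xL xS d1 ltac:(rewrite hxL; lia) ltac:(rewrite hxS; lia).
  have m2 := pair xL xT d2 ltac:(rewrite hxL; lia) ltac:(rewrite hxT; lia).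
  have m3 := pair xS xT d3 ltac:(rewrite hxS; lia) ltac:(rewrite hxT; lia).
  lia.
case/or3P.
- move=> /eqP hpm; apply/extP=> i j hij.
  have hi : (p <= s i) = false by apply/negbTE; rewrite -ltnNge hpm.
  by case: ifP; rewrite hi ?andbF.
- case/andP=> /eqP hp1 hc; apply/extP=> i j hij.
  case: ifP => [/eqP hj|hj]; apply/negP => /andP[h1 h2].
    have [e|e] := inS i ltac:(lia).
      move: hc; rewrite -e; have := ltn_ord j; lia.
    have := hsm i; have := hsm j. 
    have : nat_of_ord (s i) = m.-1 by have := hsm i; lia.
    move=> e'; have := poselE e'; rewrite hL => e''; move: hc; rewrite e''; have := ltn_ord j; lia.
  have e1 : nat_of_ord (s i) = m.-1 by have := hsm i; lia.
  have e2 : nat_of_ord (s j) = m.-1 by have := hsm j; lia.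
  have := poselE e1; have := poselE e2; rewrite hL; lia.
- case/and3P=> /eqP hp2 /eqP hLj hSj; apply/extP=> i j hij.
  case: ifP => [/eqP hj|hj]; apply/negP => /andP[h1 h2].
    have : nat_of_ord (s j) = m.-1 by rewrite -hxL; congr (nat_of_ord (s _)); apply: ord_inj; lia.
    have := hsm i; lia.
  move/negbT: hj => hj.
  have [e|e] := inS i ltac:(lia); have [e'|e'] := inS j ltac:(lia); lia.
Qed.

Lemma qmax m (p : 'I_m.+1) (s : 'S_m) :
  nat_of_ord (lift_perm ord_max p s ord_max) = p.
Proof. by rewrite lift_perm_id. Qed.

Lemma qlift m (p : 'I_m.+1) (s : 'S_m) (x : 'I_m) :
  nat_of_ord (lift_perm ord_max p s (lift ord_max x)) = s x + (p <= s x).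
Proof. by rewrite lift_perm_lift liftv. Qed.

Lemma Lq_m m (p : 'I_m.+1) (s : 'S_m) : 0 < m -> nat_of_ord p = m ->
  Lm (lift_perm ord_max p s) = m /\ SLm (lift_perm ord_max p s) = Lm s.
Proof.
move=> hm hp; have [xL [hxL hL]] := posel_ex s (r:=m.-1) ltac:(lia).
split; rewrite /Lm /SLm /=.
  by rewrite (@poselE _ _ ord_max) ?qmax.
rewrite hL (@poselE _ _ (lift ord_max xL)) ?lmv // qlift hxL hp.
have -> : (m <= m.-1) = false by lia.
by rewrite addn0.
Qed.

Lemma Lq_m1 m (p : 'I_m.+1) (s : 'S_m) : 0 < m -> nat_of_ord p = m.-1 ->
  Lm (lift_perm ord_max p s) = Lm s /\ SLm (lift_perm ord_max p s) = m.
Proof.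
move=> hm hp; have [xL [hxL hL]] := posel_ex s (r:=m.-1) ltac:(lia).
split; rewrite /Lm /SLm /=.
  rewrite hL (@poselE _ _ (lift ord_max xL)) ?lmv // qlift hxL hp leqnn; lia.
by rewrite (@poselE _ _ ord_max) ?qmax.
Qed.

Lemma Lq_m2 m (p : 'I_m.+1) (s : 'S_m) : 1 < m -> nat_of_ord p = m.-2 ->
  Lm (lift_perm ord_max p s) = Lm s /\ SLm (lift_perm ord_max p s) = SLm s.
Proof.
move=> hm hp; have [xL [hxL hL]] := posel_ex s (r:=m.-1) ltac:(lia).
have [xS [hxS hS]] := posel_ex s (r:=m.-2) ltac:(lia).
split; rewrite /Lm /SLm /=.
  rewrite hL (@poselE _ _ (lift ord_max xL)) ?lmv // qlift hxL hp.
  have -> : (m.-2 <= m.-1) = true by lia.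
  lia.
rewrite hS (@poselE _ _ (lift ord_max xS)) ?lmv // qlift hxS hp leqnn; lia.
Qed.

Lemma pointwise jb m (s : 'S_m) (p : 'I_m.+1) (R : nat -> nat -> bool) : 0 < m ->
  ext jb s p && R (Lm (lift_perm ord_max p s)) (SLm (lift_perm ord_max p s)) =
  [|| (nat_of_ord p == m) && R m (Lm s),
      (nat_of_ord p == m.-1) && (~~ ((Lm s < jb) && (jb < m)) && R (Lm s) m) |
      (nat_of_ord p == m.-2) && ((Lm s == jb) && (SLm s < jb) && R (Lm s) (SLm s))].
Proof.
move=> hm; rewrite ext_char //.
have hL := Lm_lt s hm.
case: (eqVneq (nat_of_ord p) m) => hpm.
  have [-> ->] := Lq_m s hm hpm.
  have -> : (nat_of_ord p == m.-1) = false by lia.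
  have -> : (nat_of_ord p == m.-2) = false by lia.
  by rewrite /= ?andbT ?orbF ?andbF.
case: (eqVneq (nat_of_ord p) m.-1) => hp1.
  have [-> ->] := Lq_m1 s hm hp1.
  case: (eqVneq (nat_of_ord p) m.-2) => hp2 /=.
    have hm1 : m = 1 by lia.
    have hLS : Lm s = SLm s by rewrite /Lm /SLm; have -> : m.-2 = m.-1 by lia.
    rewrite -hLS; case: (Lm s =P jb) => [->|]; rewrite ?ltnn ?andbF ?orbF //.
  by rewrite !orbF.
case: (eqVneq (nat_of_ord p) m.-2) => hp2 /=.
  have [-> ->] := Lq_m2 s ltac:(lia) hp2.
  by [].
by [].
Qed.

Lemma sum_lift m (P : pred 'S_m.+1) :
  \sum_(q : 'S_m.+1) (P q : nat) =
  \sum_(s : 'S_m) \sum_(p : 'I_m.+1) (P (lift_perm ord_max p s) : nat).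
Proof.
rewrite (partition_big (fun q : 'S_m.+1 => q ord_max) predT) //=.
rewrite [RHS]exchange_big /=; apply: eq_bigr => p _.
rewrite (reindex (lift_perm ord_max p)) /=; last first.
  pose ulsf i (s : 'S_m.+1) k := odflt k (unlift (s i) (s (lift i k))).
  have ulsfK i (s : 'S_m.+1) k: lift (s i) (ulsf i s k) = s (lift i k).
    rewrite /ulsf; have:= neq_lift i k.
    by rewrite -(can_eq (permK s)) => /unlift_some[] ? ? ->.
  have inj_ulsf: injective (ulsf ord_max _).
    move=> s; apply: can_inj (ulsf (s ord_max) s^-1%g) _ => k'.
    by rewrite {1}/ulsf ulsfK !permK liftK.
  exists (fun s => perm (inj_ulsf s)) => [s _ | s].
    by apply/permP=> k'; rewrite permE /ulsf lift_perm_lift lift_perm_id liftK.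
  move/(s _ =P _) => si0; apply/permP=> k.
  case: (unliftP ord_max k) => [k'|] ->; rewrite ?lift_perm_id //.
  by rewrite lift_perm_lift -si0 permE ulsfK.
by apply: eq_bigl => s; rewrite lift_perm_id eqxx.
Qed.

Lemma count3 m (a b c : bool) : 0 < m -> (m <= 1 -> c = false) ->
  \sum_(p : 'I_m.+1)
     ([|| (nat_of_ord p == m) && a, (nat_of_ord p == m.-1) && b |
          (nat_of_ord p == m.-2) && c] : nat) = a + b + c.
Proof.
case: m => [//|[|m]] _ hc.
  rewrite (hc erefl) !big_ord_recr big_ord0 /=.
  by case: a; case: b.
rewrite !big_ord_recr /= big1; last first.
  move=> i _; have h := ltn_ord i.
  have -> : (nat_of_ord i == m.+2) = false by lia.
  have -> : (nat_of_ord i == m.+1) = false by lia.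
  have -> : (nat_of_ord i == m) = false by lia.
  by [].
have -> : (m.+2 == m.+2) = true by lia.
have -> : (m.+1 == m.+2) = false by lia.
have -> : (m == m.+2) = false by lia.
have -> : (m.+1 == m.+1) = true by lia.
have -> : (m == m.+1) = false by lia.
have -> : (m.+2 == m.+1) = false by lia.
have -> : (m.+2 == m) = false by lia.
have -> : (m.+1 == m) = false by lia.
rewrite eqxx /=.
by clear hc; case: a; case: b; case: c.
Qed.

Definition cnt jb m (P : pred 'S_m) := \sum_(s : 'S_m) ((V jb s && P s) : nat).

Lemma step jb m (R : nat -> nat -> bool) : 0 < m ->
  cnt jb (fun q : 'S_m.+1 => R (Lm q) (SLm q)) =
  cnt jb (fun s : 'S_m => R m (Lm s)) +
  cnt jb (fun s : 'S_m => ~~ ((Lm s < jb) && (jb < m)) && R (Lm s) m) +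
  cnt jb (fun s : 'S_m => (Lm s == jb) && (SLm s < jb) && R (Lm s) (SLm s)).
Proof.
move=> hm; rewrite /cnt sum_lift -!big_split; apply: eq_bigr => s _ /=.
under eq_bigr => p _ do rewrite valid_lift -andbA pointwise //.
case: (V jb s) => /=; last by rewrite big1.
rewrite count3 //.
move=> hm1; rewrite /Lm /SLm.
have -> : m.-2 = m.-1 by lia.
by case: eqP => // ->; rewrite ltnn andbF.
Qed.

Lemma cnt_ext jb m (P Q : pred 'S_m) : (forall s, V jb s -> P s = Q s) ->
  cnt jb P = cnt jb Q.
Proof.
move=> h; apply: eq_bigr => s _; case hv: (V jb s) => //=; by rewrite h.
Qed.

Lemma cnt0 jb m (P : pred 'S_m) : (forall s, V jb s -> P s = false) -> cnt jb P = 0.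
Proof. by move=> h; apply: big1 => s _; case hv: (V jb s) => //=; rewrite h. Qed.

Lemma cnt_or jb m (P Q : pred 'S_m) : (forall s, V jb s -> ~~ (P s && Q s)) ->
  cnt jb (fun s => P s || Q s) = cnt jb P + cnt jb Q.
Proof.
move=> h; rewrite /cnt -big_split; apply: eq_bigr => s _ /=.
case hv: (V jb s) => //=; have := h s hv; by case: (P s); case: (Q s).
Qed.

Definition T jb m := cnt jb (fun _ : 'S_m => true).
Definition E jb m := cnt jb (fun s : 'S_m => jb < Lm s).
Definition X jb m := cnt jb (fun s : 'S_m => Lm s == jb).
Definition C jb m := cnt jb (fun s : 'S_m => (Lm s == jb) && (SLm s < jb)).

Lemma T1 jb : T jb 1 = 1.
Proof.
rewrite /T /cnt (eq_bigr (fun _ => 1)).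
  by rewrite sum1_card card_Sn.
move=> s _; have -> // : V jb s.
by apply/VP => i j k; have := ltn_ord i; have := ltn_ord j; lia.
Qed.

Lemma recT_A jb m : 0 < m -> (m <= jb \/ jb = 0) -> T jb m.+1 = 2 * T jb m.
Proof.
move=> hm hj; rewrite /T (step jb (fun _ _ => true) hm) /=.
have hL : forall s : 'S_m, Lm s < m := fun s => Lm_lt s hm.
rewrite (@cnt_ext _ _ (fun s : 'S_m => ~~ ((Lm s < jb) && (jb < m)) && true) (fun _ => true)); last by move=> s _; have := hL s; lia.
rewrite (@cnt0 _ _ (fun s : 'S_m => (Lm s == jb) && (SLm s < jb) && true)); first lia.
by move=> s _; have := hL s; lia.
Qed.

Lemma recT_B jb m : 0 < m -> jb < m -> T jb m.+1 = T jb m + E jb m + X jb m + C jb m.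
Proof.
move=> hm hj; rewrite /T (step jb (fun _ _ => true) hm) /=.
rewrite (@cnt_ext _ _ (fun s : 'S_m => ~~ ((Lm s < jb) && (jb < m)) && true) (fun s => (jb < Lm s) || (Lm s == jb))); last by move=> s _; lia.
rewrite cnt_or; last by move=> s _; lia.
rewrite (@cnt_ext _ _ (fun s : 'S_m => (Lm s == jb) && (SLm s < jb) && true)
   (fun s => (Lm s == jb) && (SLm s < jb))); last by move=> s _; rewrite andbT.
rewrite /E /X /C; lia.
Qed.

Lemma recE jb m : 0 < m -> E jb m.+1 = (jb < m) * T jb m + E jb m.
Proof.
move=> hm; rewrite /E (step jb (fun a _ => jb < a) hm) /=.
have hL : forall s : 'S_m, Lm s < m := fun s => Lm_lt s hm.
rewrite (@cnt0 _ _ (fun s : 'S_m => (Lm s == jb) && (SLm s < jb) && (jb < Lm s))); last first.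
  by move=> s _; lia.
rewrite (@cnt_ext _ _ (fun s : 'S_m => ~~ ((Lm s < jb) && (jb < m)) && (jb < Lm s))
   (fun s => jb < Lm s)); last by move=> s _; lia.
case: (ltnP jb m) => h.
  by rewrite /T mul1n addn0.
rewrite (@cnt0 _ _ (fun _ : 'S_m => false)) // mul0n; lia.
Qed.

Lemma recX_eq jb m : 0 < m -> m = jb -> X jb m.+1 = T jb m.
Proof.
move=> hm hj; rewrite /X (step jb (fun a _ => a == jb) hm) /=.
have hL : forall s : 'S_m, Lm s < m := fun s => Lm_lt s hm.
rewrite (@cnt0 _ _ (fun s : 'S_m => (Lm s == jb) && (SLm s < jb) && (Lm s == jb))); last first.
  by move=> s _; have := hL s; lia.
rewrite (@cnt0 _ _ (fun s : 'S_m => ~~ ((Lm s < jb) && (jb < m)) && (Lm s == jb))); last first.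
  by move=> s _; have := hL s; lia.
rewrite (@cnt_ext _ _ (fun s : 'S_m => m == jb) (fun _ => true)) /T; last by move=> s _; lia.
lia.
Qed.

Lemma recX_B jb m : 0 < m -> jb < m -> X jb m.+1 = X jb m + C jb m.
Proof.
move=> hm hj; rewrite /X (step jb (fun a _ => a == jb) hm) /=.
rewrite (@cnt0 _ _ (fun s : 'S_m => m == jb)); last by move=> s _; lia.
rewrite (@cnt_ext _ _ (fun s : 'S_m => (Lm s == jb) && (SLm s < jb) && (Lm s == jb))
    (fun s => (Lm s == jb) && (SLm s < jb))); last by move=> s _; lia.
rewrite (@cnt_ext _ _ (fun s : 'S_m => ~~ ((Lm s < jb) && (jb < m)) && (Lm s == jb))
    (fun s => Lm s == jb)); last by move=> s _; lia.
rewrite /C; lia.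
Qed.

Lemma recC_eq jb m : 0 < m -> m = jb -> C jb m.+1 = T jb m.
Proof.
move=> hm hj; rewrite /C (step jb (fun a b => (a == jb) && (b < jb)) hm) /=.
have hL : forall s : 'S_m, Lm s < m := fun s => Lm_lt s hm.
rewrite (@cnt0 _ _ (fun s : 'S_m => (Lm s == jb) && (SLm s < jb) && ((Lm s == jb) && (SLm s < jb)))); last first.
  by move=> s _; have := hL s; lia.
rewrite (@cnt0 _ _ (fun s : 'S_m => ~~ ((Lm s < jb) && (jb < m)) && ((Lm s == jb) && (m < jb)))); last first.
  by move=> s _; have := hL s; lia.
rewrite (@cnt_ext _ _ (fun s : 'S_m => (m == jb) && (Lm s < jb)) (fun _ => true)) /T; last first.
  by move=> s _; have := hL s; lia.
lia.
Qed.

Lemma recC_B jb m : 0 < m -> jb < m -> C jb m.+1 = C jb m.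
Proof.
move=> hm hj; rewrite /C (step jb (fun a b => (a == jb) && (b < jb)) hm) /=.
have hL : forall s : 'S_m, Lm s < m := fun s => Lm_lt s hm.
rewrite (@cnt0 _ _ (fun s : 'S_m => (m == jb) && (Lm s < jb))); last by move=> s _; lia.
rewrite (@cnt0 _ _ (fun s : 'S_m => ~~ ((Lm s < jb) && (jb < m)) && ((Lm s == jb) && (m < jb)))); last first.
  by move=> s _; lia.
rewrite (@cnt_ext _ _ (fun s : 'S_m => (Lm s == jb) && (SLm s < jb) && ((Lm s == jb) && (SLm s < jb)))
   (fun s => (Lm s == jb) && (SLm s < jb))); last by move=> s _; rewrite andbb.
by [].
Qed.

Lemma phase1 jb m : 0 < m -> (m <= jb.+1 \/ jb = 0) -> T jb m = 2 ^ (m - 1).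
Proof.
elim: m => [//|m IH] _ hj.
case: m IH hj => [|m] IH hj; first by rewrite T1.
rewrite recT_A //; try lia.
rewrite IH //; last by lia.
by rewrite !subn1 /= expnS.
Qed.

Lemma at_jb1 j : let jb := j.+1 in
  [/\ T jb jb.+1 = 2 ^ jb, E jb jb.+1 = 0, X jb jb.+1 = 2 ^ j & C jb jb.+1 = 2 ^ j].
Proof.
move=> jb.
have hT : T jb jb = 2 ^ j by rewrite phase1 /jb ?subn1 //; lia.
split.
- by rewrite phase1 /jb ?subn1 //; lia.
- rewrite recE // ltnn mul0n add0n; apply: cnt0 => s _.
  by have := @Lm_lt jb s ltac:(done); lia.
- by rewrite recX_eq.
- by rewrite recC_eq.
Qed.

Lemma phase2 j d :
  [/\ E j.+1 (j + 3 + d) + X j.+1 (j + 3 + d) = T j.+1 (j + 3 + d),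
       C j.+1 (j + 3 + d) = 2 ^ j & T j.+1 (j + 3 + d) + 2 ^ j = 5 * 2 ^ (j + d)].
Proof.
elim: d => [|d IH].
  have [h1 h2 h3 h4] := at_jb1 j.
  have hm : j + 3 + 0 = j.+3 by lia.
  rewrite hm /=.
  rewrite (@recT_B _ j.+2) // (@recE _ j.+2) // (@recX_B _ j.+2) // (@recC_B _ j.+2) //.
  rewrite h1 h2 h3 h4 ltnSn mul1n !expnS addn0.
  rewrite ?addn0; split; lia.
have hm : j + 3 + d.+1 = (j + 3 + d).+1 by lia.
rewrite hm; case: IH => [i1 i2 i3].
rewrite (@recT_B _ (j + 3 + d)); try lia.
rewrite (@recE _ (j + 3 + d)); try lia.
rewrite (@recX_B _ (j + 3 + d)); try lia.
rewrite (@recC_B _ (j + 3 + d)); try lia.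
have -> : (j.+1 < j + 3 + d) = true by lia.
rewrite mul1n i2 (addnS j d) expnS.
split; lia.
Qed.

Lemma T_small jb m : 0 < m -> m <= jb.+2 -> T jb m = 2 ^ (m - 1).
Proof.
move=> hm hj.
case: (leqP m jb.+1) => h; first by rewrite phase1 //; left.
have -> : m = jb.+2 by lia.
case: jb hj h => [|j] hj h; first by rewrite phase1 //; right.
have [h1 h2 h3 h4] := at_jb1 j.
rewrite (@recT_B _ j.+2) // h1 h2 h3 h4 subSS subn0 !expnS; lia.
Qed.

Lemma T_big j m : j + 3 <= m -> T j.+1 m + 2 ^ j = 5 * 2 ^ (m - 3).
Proof.
move=> hm; have [_ _ h] := phase2 j (m - (j + 3)).
have e : j + 3 + (m - (j + 3)) = m by lia.
rewrite e in h; rewrite h; congr (_ * 2 ^ _); lia.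
Qed.

Lemma f_T m (B : pred int) jb :
  (forall j : nat, 0 < j -> j < m -> B (Posz j.+1) = (j == jb)) -> f m B = T jb m.
Proof.
move=> hB; rewrite /f /T /cnt -sum1_card big_mkcond /=.
apply: eq_bigr => q _; rewrite inE andbT.
suff -> : [forall i : 'I_m, forall j : 'I_m, forall k : 'I_m,
        ((i < j) && (j < k)) ==> good_triple B q i j k] = V jb q by [].
apply: eq_forallb => i; apply: eq_forallb => j; apply: eq_forallb => k.
case hij: (i < j) => //=; case hjk: (j < k) => //=.
rewrite /good_triple /g3 /elt hB //; try lia; exact: ltn_ord.
Qed.

Lemma hB1 n k : forall j : nat, 0 < j -> j < n ->
  pred1 (Posz n - Posz k)%R (Posz j.+1) = (j == n - k - 1).
Proof. move=> j hj _ /=; lia. Qed.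

Lemma hB2 k : 1 <= k -> forall j : nat, 0 < j ->   pred1 (Posz k) (Posz j.+1) = (j == k - 1).
Proof. move=> hk j hj /=; lia. Qed.

Unset Implicit Arguments.
Set Strict Implicit.

Theorem proposition6 (n k : nat) (hn : 1 <= n) (hk : 1 <= k) :
  [/\ k = 1 ->
        f n (pred1 (Posz n - Posz k)%R) = 2 ^ (n - 1) /\ f n (pred1 (Posz k)) = 2 ^ (n - 1),
      1 < k -> n <= k + 1 ->
        f n (pred1 (Posz n - Posz k)%R) = 2 ^ (n - 1) /\ f n (pred1 (Posz k)) = 2 ^ (n - 1)
    & 1 < k -> k + 1 < n ->
        f n (pred1 (Posz n - Posz k)%R) = 5 * 2 ^ (n - 3) - 2 ^ (n - k - 2) /\
        f n (pred1 (Posz k)) = 5 * 2 ^ (n - 3) - 2 ^ (k - 2)].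
Proof.
have F1 : f n (pred1 (Posz n - Posz k)%R) = T (n - k - 1) n.
  by apply: f_T => j hj hjn; exact: hB1.
have F2 : f n (pred1 (Posz k)) = T (k - 1) n.
  by apply: f_T => j hj hjn; exact: hB2.
rewrite F1 F2; split.
- move=> ->; split.
    by rewrite T_small //; lia.
  by rewrite phase1 //; right.
- move=> h1 h2; split.
    by rewrite phase1 //; right; lia.
  by rewrite T_small //; lia.
- move=> h1 h2; split.
    have -> : n - k - 1 = (n - k - 2).+1 by lia.
    have := T_big (j := n - k - 2) (m := n) ltac:(lia); lia.
  have -> : k - 1 = (k - 2).+1 by lia.
  have := T_big (j := k - 2) (m := n) ltac:(lia); lia.
Qed.
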